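(* Let $\Lambda$ be a finitely aligned $k$-graph, $c\in Z^2(\Lambda,\mathbb T)$, $\mathcal E$ a satiated subset of $\mathrm{FE}(\Lambda)$, and $I$ an ideal of $C^*(\Lambda,c;\mathcal E)$. Then: (1) $H_I:=\{v\in\Lambda^0:s^c_{\mathcal E}(v)\in I\}$ is hereditary and $\mathcal E$-saturated; (2) $\mathcal B_I:=\{F\in\mathrm{FE}(\Lambda\setminus\Lambda H_I):\Delta(s^c_{\mathcal E})^F\in I\}$ is a satiated subset of $\mathrm{FE}(\Lambda\setminus\Lambda H_I)$; (3) $\mathcal E_{H_I}\subseteq\mathcal B_I$, where $\mathcal E_{H}:=\{E\setminus EH:E\in\mathcal E,\ r(E)\notin H\}$.
   Context: $k$-graph notation: countable category $\Lambda$, degree functor $d:\Lambda\to\mathbb N^k$ with unique factorisation, $\Lambda^n=d^{-1}(n)$, vertices $\Lambda^0$, $r,s$; $EH=\{\lambda\in E:s(\lambda)\in H\}$, $\Lambda H=\{\lambda:s(\lambda)\in H\}$, $H\Lambda=\{\lambda:r(\lambda)\in H\}$. $\mathrm{MCE}(\mu,\nu)=\{\lambda\in\Lambda^{d(\mu)\vee d(\nu)}:\lambda=\mu\alpha=\nu\beta\}$; finitely aligned: all finite. $\mathrm{FE}(\Lambda)$: finite exhaustive $E\subseteq v\Lambda$ ($v=:r(E)$), $E\cap\Lambda^0=\emptyset$ (exhaustive: every $\lambda\in v\Lambda$ has $\mathrm{MCE}(\lambda,\mu)\neq\emptyset$ for some $\mu\in E$). $\mathrm{Ext}(\lambda;E)=\bigcup_{\mu\in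 E}\{\alpha:\lambda\alpha\in\mathrm{MCE}(\lambda,\mu)\}$. A subset $\mathcal E$ of $\mathrm{FE}(\Gamma)$ of a finitely aligned $k$-graph $\Gamma$ is satiated if closed under (S1) $F\mapsto F\cup\{\lambda\}$, $\lambda\in r(F)\Gamma\setminus\{r(F)\}$; (S2) $F\mapsto\mathrm{Ext}(\lambda;F)$, $\lambda\in r(F)\Gamma\setminus F\Gamma$; (S3) $F\mapsto F\setminus\{\lambda\lambda'\}$ if $\lambda,\lambda\lambda'\in F$, $\lambda'\ne s(\lambda)$; (S4) $(F,G)\mapsto(F\setminus\{\lambda\})\cup\lambda G$ if $\lambda\in F$, $G\in\mathcal E$, $r(G)=s(\lambda)$. $H\subseteq\Lambda^0$ is hereditary if $s(H\Lambda)\subseteq H$, and $\mathcal E$-saturated if $E\in\mathcal E$, $s(E)\subseteq H$ imply $r(E)\in H$. For hereditary $H$, $\Lambda\setminus\Lambda H$ is a finitely aligned $k$-graph with inherited structure. $Z^2(\Lambda,\mathbb T)$: normalised $\mathbb T$-valued 2-cocycles. Toeplitz-Cuntz-Krieger $(\Lambda,c)$-family: (TCK1) $t_v$ mutually orthogonal projections; (TCK2) $t_\mu t_\nu=c(\mu,\nu)t_{\mu\nu}$; (TCK3) $t_\lambda^*t_\lambda=t_{s(\lambda)}$; (TCK4) $t_\mu t_\mu^*t_\nu t_\nu^*=\sum_{\lambda\in\mathrm{MCE}(\mu,\nu)}t_\lambda t_\lambda^*$. $\Delta(t)^E=\prod_{\lambda\in E}(t_{r(E)}-t_\lambda t_\lambda^*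 )$ for finite $E\subseteq r(E)\Lambda$. $C^*(\Lambda,c;\mathcal E)$ is the universal $C^*$-algebra for Toeplitz-Cuntz-Krieger $(\Lambda,c)$-families with $\Delta(t)^E=0$ for all $E\in\mathcal E$, with generators $s^c_{\mathcal E}(\lambda)$. *)

(* Defs.v *)
From Stdlib Require Import Reals List.
Open Scope R_scope.
Set Implicit Arguments.

Record Cplx := mkCplx { Cre : R; Cim : R }.
Definition C0 : Cplx := mkCplx 0 0.
Definition C1 : Cplx := mkCplx 1 0.
Definition Cadd (x y : Cplx) : Cplx := mkCplx (Cre x + Cre y) (Cim x + Cim y).
Definition Cmul (x y : Cplx) : Cplx :=
  mkCplx (Cre x * Cre y - Cim x * Cim y) (Cre x * Cim y + Cim x * Cre y).
Definition Cconj (x : Cplx) : Cplx := mkCplx (Cre x) (- Cim x).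
Definition Cmod (x : Cplx) : R := sqrt (Cre x * Cre x + Cim x * Cim x).

Record CStar := {
  cs_car :> Type;
  cs_zero : cs_car;
  cs_add : cs_car -> cs_car -> cs_car;
  cs_opp : cs_car -> cs_car;
  cs_scal : Cplx -> cs_car -> cs_car;
  cs_mul : cs_car -> cs_car -> cs_car;
  cs_star : cs_car -> cs_car;
  cs_norm : cs_car -> R;
  cs_addA : forall a b c, cs_add a (cs_add b c) = cs_add (cs_add a b) c;
  cs_addC : forall a b, cs_add a b = cs_add b a;
  cs_add0 : forall a, cs_add cs_zero a = a;
  cs_addN : forall a, cs_add a (cs_opp a) = cs_zero;
  cs_scal1 : forall a, cs_scal C1 a = a;
  cs_scalA : forall x y a, cs_scal (Cmul x y) a = cs_scal x (cs_scal y a);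
  cs_scalDl : forall x y a, cs_scal (Cadd x y) a = cs_add (cs_scal x a) (cs_scal y a);
  cs_scalDr : forall x a b, cs_scal x (cs_add a b) = cs_add (cs_scal x a) (cs_scal x b);
  cs_mulA : forall a b c, cs_mul a (cs_mul b c) = cs_mul (cs_mul a b) c;
  cs_mulDl : forall a b c, cs_mul (cs_add a b) c = cs_add (cs_mul a c) (cs_mul b c);
  cs_mulDr : forall a b c, cs_mul a (cs_add b c) = cs_add (cs_mul a b) (cs_mul a c);
  cs_scal_mull : forall x a b, cs_scal x (cs_mul a b) = cs_mul (cs_scal x a) b;
  cs_scal_mulr : forall x a b, cs_scal x (cs_mul a b) = cs_mul a (cs_scal x b);
  cs_starK : forall a, cs_star (cs_star a) = a;
  cs_starD : forall a b, cs_star (cs_add a b) = cs_add (cs_star a) (cs_star b);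
  cs_starZ : forall x a, cs_star (cs_scal x a) = cs_scal (Cconj x) (cs_star a);
  cs_starM : forall a b, cs_star (cs_mul a b) = cs_mul (cs_star b) (cs_star a);
  cs_norm_eq0 : forall a, cs_norm a = 0 <-> a = cs_zero;
  cs_normD : forall a b, cs_norm (cs_add a b) <= cs_norm a + cs_norm b;
  cs_normZ : forall x a, cs_norm (cs_scal x a) = Cmod x * cs_norm a;
  cs_normM : forall a b, cs_norm (cs_mul a b) <= cs_norm a * cs_norm b;
  cs_Cstar_id : forall a, cs_norm (cs_mul (cs_star a) a) = cs_norm a * cs_norm a;
  cs_complete : forall u : nat -> cs_car,
    (forall eps, 0 < eps -> exists N, forall m n, (N <= m)%nat -> (N <= n)%nat ->
        cs_norm (cs_add (u m) (cs_opp (u n))) < eps) ->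
    exists l, forall eps, 0 < eps -> exists N, forall n, (N <= n)%nat ->
        cs_norm (cs_add (u n) (cs_opp l)) < eps
}.

Arguments cs_zero {_}.
Arguments cs_add {_} _ _.
Arguments cs_opp {_} _.
Arguments cs_scal {_} _ _.
Arguments cs_mul {_} _ _.
Arguments cs_star {_} _.
Arguments cs_norm {_} _.

Definition closed_ideal (A : CStar) (I : A -> Prop) : Prop :=
  I cs_zero /\
  (forall a b, I a -> I b -> I (cs_add a b)) /\
  (forall x a, I a -> I (cs_scal x a)) /\
  (forall a b, I b -> I (cs_mul a b)) /\
  (forall a b, I a -> I (cs_mul a b)) /\
  (forall (u : nat -> A) l, (forall n, I (u n)) ->
     (forall eps, 0 < eps -> exists N, forall n, (N <= n)%nat ->
        cs_norm (cs_add (u n) (cs_opp l)) < eps) -> I l).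

Definition star_hom {A B : CStar} (phi : A -> B) : Prop :=
  (forall a b, phi (cs_add a b) = cs_add (phi a) (phi b)) /\
  (forall x a, phi (cs_scal x a) = cs_scal x (phi a)) /\
  (forall a b, phi (cs_mul a b) = cs_mul (phi a) (phi b)) /\
  (forall a, phi (cs_star a) = cs_star (phi a)).

(* Morphisms live in kM; kdom carves out the morphisms of the graph (this lets
   subgraphs such as Lambda \ Lambda H be expressed by restricting kdom).
   Vertices are the degree-0 morphisms (identities).  Degrees are nat -> nat
   functions, supported on 0..k-1 by the k-graph axioms. *)
Record kg := {
  kM : Type;
  kdom : kM -> Prop;
  kr : kM -> kM;
  ks : kM -> kM;
  kcomp : kM -> kM -> kM;
  kd : kM -> nat -> nat
}.

Definition deg0 : nat -> nat := fun _ => 0%nat.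
Definition dadd (m n : nat -> nat) : nat -> nat := fun i => (m i + n i)%nat.
Definition djoin (m n : nat -> nat) : nat -> nat := fun i => Nat.max (m i) (n i).

Section KG.
Variable G : kg.

Definition Vertex (v : kM G) : Prop := kdom G v /\ kd G v = deg0.

Definition is_kgraph (k : nat) : Prop :=
  (exists f : kM G -> nat, forall x y, kdom G x -> kdom G y -> f x = f y -> x = y) /\
  (forall l, kdom G l -> forall i, (k <= i)%nat -> kd G l i = 0%nat) /\
  (forall l, kdom G l -> Vertex (kr G l) /\ Vertex (ks G l)) /\
  (forall v, Vertex v -> kr G v = v /\ ks G v = v) /\
  (forall m n, kdom G m -> kdom G n -> ks G m = kr G n ->
     kdom G (kcomp G m n) /\ kr G (kcomp G m n) = kr G m /\
     ks G (kcomp G m n) = ks G n /\ kd G (kcomp G m n) = dadd (kd G m) (kd G n)) /\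
  (forall l, kdom G l -> kcomp G (kr G l) l = l /\ kcomp G l (ks G l) = l) /\
  (forall a b c, kdom G a -> kdom G b -> kdom G c -> ks G a = kr G b -> ks G b = kr G c ->
     kcomp G (kcomp G a b) c = kcomp G a (kcomp G b c)) /\
  (forall l m n, kdom G l -> kd G l = dadd m n ->
     (exists a b, kdom G a /\ kdom G b /\ ks G a = kr G b /\ kd G a = m /\ kd G b = n /\
        l = kcomp G a b) /\
     (forall a b a' b', kdom G a -> kdom G b -> kdom G a' -> kdom G b' ->
        ks G a = kr G b -> ks G a' = kr G b' -> kd G a = m -> kd G b = n ->
        kd G a' = m -> kd G b' = n -> l = kcomp G a b -> l = kcomp G a' b' ->
        a = a' /\ b = b')).

Definition finite_set {T : Type} (P : T -> Prop) : Prop :=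
  exists l : list T, forall x, P x <-> In x l.

Definition MCE (m n l : kM G) : Prop :=
  kdom G l /\ kd G l = djoin (kd G m) (kd G n) /\
  (exists a, kdom G a /\ ks G m = kr G a /\ l = kcomp G m a) /\
  (exists b, kdom G b /\ ks G n = kr G b /\ l = kcomp G n b).

Definition finitely_aligned : Prop :=
  forall m n, kdom G m -> kdom G n -> finite_set (MCE m n).

Definition FEat (E : kM G -> Prop) (v : kM G) : Prop :=
  Vertex v /\ finite_set E /\
  (forall m, E m -> kdom G m /\ kr G m = v /\ ~ Vertex m) /\
  (forall l, kdom G l -> kr G l = v -> exists m, E m /\ exists p, MCE l m p).

Definition FE (E : kM G -> Prop) : Prop := exists v, FEat E v.

Definition Ext (l : kM G) (F : kM G -> Prop) (a : kM G) : Prop :=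
  exists m, F m /\ kdom G a /\ ks G l = kr G a /\ MCE l m (kcomp G l a).

Definition satiated (calE : (kM G -> Prop) -> Prop) : Prop :=
  (forall F, calE F -> FE F) /\
  (forall F v l, calE F -> FEat F v -> kdom G l -> kr G l = v -> l <> v ->
     calE (fun m => F m \/ m = l)) /\
  (forall F v l, calE F -> FEat F v -> kdom G l -> kr G l = v ->
     ~ (exists m a, F m /\ kdom G a /\ ks G m = kr G a /\ l = kcomp G m a) ->
     calE (Ext l F)) /\
  (forall F l l', calE F -> F l -> kdom G l' -> ks G l = kr G l' ->
     F (kcomp G l l') -> l' <> ks G l ->
     calE (fun m => F m /\ m <> kcomp G l l')) /\
  (forall F F' l, calE F -> calE F' -> F l -> FEat F' (ks G l) ->
     calE (fun m => (F m /\ m <> l) \/ exists g, F' g /\ m = kcomp G l g)).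

Definition hereditary (H : kM G -> Prop) : Prop :=
  forall l, kdom G l -> H (kr G l) -> H (ks G l).

Definition E_saturated (calE : (kM G -> Prop) -> Prop) (H : kM G -> Prop) : Prop :=
  forall E v, calE E -> FEat E v -> (forall m, E m -> H (ks G m)) -> H v.

Definition cocycle (c : kM G -> kM G -> Cplx) : Prop :=
  (forall m n, kdom G m -> kdom G n -> ks G m = kr G n -> Cmod (c m n) = 1) /\
  (forall a b d, kdom G a -> kdom G b -> kdom G d -> ks G a = kr G b -> ks G b = kr G d ->
     Cmul (c a b) (c (kcomp G a b) d) = Cmul (c b d) (c a (kcomp G b d))) /\
  (forall l, kdom G l -> c l (ks G l) = C1 /\ c (kr G l) l = C1).

Variable A : CStar.

Definition sum_over (P : kM G -> Prop) (f : kM G -> A) (x : A) : Prop :=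
  exists l, NoDup l /\ (forall m, P m <-> In m l) /\
    x = fold_right (fun m acc => cs_add (f m) acc) cs_zero l.

Fixpoint prod_list (f : kM G -> A) (dflt : A) (l : list (kM G)) : A :=
  match l with
  | nil => dflt
  | x :: nil => f x
  | x :: l' => cs_mul (f x) (prod_list f dflt l')
  end.

Definition proj_of (t : kM G -> A) (l : kM G) : A := cs_mul (t l) (cs_star (t l)).

(* Delta(t)^E = prod_{l in E} (t_v - t_l t_l^* ) computed along some enumeration of E *)
Definition Delta_is (t : kM G -> A) (v : kM G) (E : kM G -> Prop) (x : A) : Prop :=
  exists l, NoDup l /\ (forall m, E m <-> In m l) /\
    x = prod_list (fun m => cs_add (t v) (cs_opp (proj_of t m))) (t v) l.

Definition TCK_family (c : kM G -> kM G -> Cplx) (t : kM G -> A) : Prop :=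
  (forall v, Vertex v -> cs_mul (t v) (t v) = t v /\ cs_star (t v) = t v) /\
  (forall v w, Vertex v -> Vertex w -> v <> w -> cs_mul (t v) (t w) = cs_zero) /\
  (forall m n, kdom G m -> kdom G n -> ks G m = kr G n ->
     cs_mul (t m) (t n) = cs_scal (c m n) (t (kcomp G m n))) /\
  (forall l, kdom G l -> cs_mul (cs_star (t l)) (t l) = t (ks G l)) /\
  (forall m n, kdom G m -> kdom G n ->
     sum_over (MCE m n) (proj_of t) (cs_mul (proj_of t m) (proj_of t n))).

Definition CK_family (c : kM G -> kM G -> Cplx) (calE : (kM G -> Prop) -> Prop)
  (t : kM G -> A) : Prop :=
  TCK_family c t /\ (forall E v, calE E -> FEat E v -> Delta_is t v E cs_zero).

End KG.

Definition is_universal (G : kg) (c : kM G -> kM G -> Cplx)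
  (calE : (kM G -> Prop) -> Prop) (A : CStar) (s : kM G -> A) : Prop :=
  CK_family G A c calE s /\
  forall (B : CStar) (t : kM G -> B), CK_family G B c calE t ->
    (exists phi : A -> B, star_hom phi /\ forall l, kdom G l -> phi (s l) = t l) /\
    (forall phi psi : A -> B, star_hom phi -> star_hom psi ->
       (forall l, kdom G l -> phi (s l) = t l) ->
       (forall l, kdom G l -> psi (s l) = t l) -> forall a, phi a = psi a).

Definition restrict (G : kg) (H : kM G -> Prop) : kg :=
  {| kM := kM G; kdom := fun l => kdom G l /\ ~ H (ks G l);
     kr := kr G; ks := ks G; kcomp := kcomp G; kd := kd G |}.

Definition H_of (G : kg) (A : CStar) (s : kM G -> A) (I : A -> Prop) : kM G -> Prop :=
  fun v => Vertex G v /\ I (s v).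

Definition B_of (G : kg) (A : CStar) (s : kM G -> A) (I : A -> Prop) (H : kM G -> Prop)
  : (kM G -> Prop) -> Prop :=
  fun F => FE (restrict G H) F /\
    exists v, FEat (restrict G H) F v /\ exists x, Delta_is G A s v F x /\ I x.

Definition E_of (G : kg) (calE : (kM G -> Prop) -> Prop) (H : kM G -> Prop)
  : (kM G -> Prop) -> Prop :=
  fun F => exists E v, calE E /\ FEat G E v /\ ~ H v /\
    F = (fun m => E m /\ ~ H (ks G m)).

(* Main.v *)
Require Import Defs.
From Stdlib Require Import Reals List.
From Stdlib Require Import Lia Lra Permutation Classical ClassicalEpsilon FunctionalExtensionality.

Declare Scope cs_scope.
Notation "a + b" := (cs_add a b) : cs_scope.
Notation "a * b" := (cs_mul a b) : cs_scope.
Notation "- a" := (cs_opp a) : cs_scope.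
Notation "0" := (cs_zero) : cs_scope.

Section Alg.
Context {A : CStar}.
Local Open Scope cs_scope.

Lemma addrC (a b : A) : a + b = b + a. Proof. apply cs_addC. Qed.
Lemma addrA (a b c : A) : a + (b + c) = a + b + c. Proof. apply cs_addA. Qed.
Lemma add0r (a : A) : 0 + a = a. Proof. apply cs_add0. Qed.
Lemma addr0 (a : A) : a + 0 = a. Proof. rewrite addrC; apply add0r. Qed.
Lemma addrN (a : A) : a + - a = 0. Proof. apply cs_addN. Qed.
Lemma addNr (a : A) : - a + a = 0. Proof. rewrite addrC; apply addrN. Qed.
Lemma addKr (a b : A) : - a + (a + b) = b.
Proof. rewrite addrA, addNr, add0r; reflexivity. Qed.
Lemma add_cancel (a b c : A) : a + b = a + c -> b = c.
Proof. intro H. rewrite <- (addKr a b), <- (addKr a c), H. reflexivity. Qed.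
Lemma opp_unique (a b : A) : a + b = 0 -> b = - a.
Proof. intro H. rewrite <- (addKr a b), H, addr0. reflexivity. Qed.
Lemma oppK (a : A) : - - a = a.
Proof. symmetry. apply opp_unique. apply addNr. Qed.
Lemma opp0 : - (0 : A) = 0.
Proof. symmetry. apply opp_unique. apply add0r. Qed.
Lemma oppD (a b : A) : - (a + b) = - a + - b.
Proof.
  symmetry. apply opp_unique.
  rewrite (addrC (-a) (-b)), addrA, <- (addrA a b (-b)), addrN, addr0, addrN.
  reflexivity.
Qed.
Lemma mul0r (a : A) : 0 * a = 0.
Proof.
  apply (add_cancel (0 * a)). rewrite <- cs_mulDl, add0r, addr0. reflexivity.
Qed.
Lemma mulr0 (a : A) : a * 0 = 0.
Proof.
  apply (add_cancel (a * 0)). rewrite <- cs_mulDr, add0r, addr0. reflexivity.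
Qed.
Lemma mulNr (a b : A) : (- a) * b = - (a * b).
Proof. apply opp_unique. rewrite <- cs_mulDl, addrN, mul0r. reflexivity. Qed.
Lemma mulrN (a b : A) : a * (- b) = - (a * b).
Proof. apply opp_unique. rewrite <- cs_mulDr, addrN, mulr0. reflexivity. Qed.
Lemma mulA (a b c : A) : a * (b * c) = a * b * c. Proof. apply cs_mulA. Qed.
Lemma mulDl (a b c : A) : (a + b) * c = a * c + b * c. Proof. apply cs_mulDl. Qed.
Lemma mulDr (a b c : A) : a * (b + c) = a * b + a * c. Proof. apply cs_mulDr. Qed.
Lemma star0 : cs_star (0 : A) = 0.
Proof. apply (add_cancel (cs_star (0:A))). rewrite <- cs_starD, add0r, addr0. reflexivity. Qed.
Lemma starN (a : A) : cs_star (- a) = - cs_star a.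
Proof. apply opp_unique. rewrite <- cs_starD, addrN, star0. reflexivity. Qed.
Lemma starD (a b : A) : cs_star (a + b) = cs_star a + cs_star b. Proof. apply cs_starD. Qed.
Lemma starM (a b : A) : cs_star (a * b) = cs_star b * cs_star a. Proof. apply cs_starM. Qed.
Lemma starK (a : A) : cs_star (cs_star a) = a. Proof. apply cs_starK. Qed.

Lemma scalC0 (a : A) : cs_scal C0 a = 0.
Proof.
  apply (add_cancel (cs_scal C0 a)). rewrite <- cs_scalDl, addr0.
  f_equal. unfold Cadd, C0; simpl. f_equal; ring.
Qed.
Lemma scalN1 (a : A) : cs_scal (mkCplx (-1) 0) a = - a.
Proof.
  apply opp_unique. rewrite <- (cs_scal1 _ a) at 1. rewrite <- cs_scalDl.
  rewrite <- (scalC0 a). f_equal. unfold Cadd, C0, Defs.C1; simpl. f_equal; ring.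
Qed.
Lemma scal_mul2 (x y : Cplx) (a b : A) :
  cs_scal x a * cs_scal y b = cs_scal (Cmul x y) (a * b).
Proof. rewrite cs_scalA, <- cs_scal_mull, <- cs_scal_mulr. reflexivity. Qed.

Lemma mul_sum_l (B : Type) (f : B -> A) (L : list B) (a : A) :
  a * fold_right (fun m acc => f m + acc) 0 L = fold_right (fun m acc => a * f m + acc) 0 L.
Proof. induction L; simpl. apply mulr0. rewrite mulDr, IHL. reflexivity. Qed.
Lemma mul_sum_r (B : Type) (f : B -> A) (L : list B) (a : A) :
  fold_right (fun m acc => f m + acc) 0 L * a = fold_right (fun m acc => f m * a + acc) 0 L.
Proof. induction L; simpl. apply mul0r. rewrite mulDl, IHL. reflexivity. Qed.

Variable I : A -> Prop.
Hypothesis HI : closed_ideal A I.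

Lemma I0 : I 0. Proof. apply HI. Qed.
Lemma IaddD a b : I a -> I b -> I (a + b). Proof. apply HI. Qed.
Lemma ImulL a b : I b -> I (a * b). Proof. apply HI. Qed.
Lemma ImulR a b : I a -> I (a * b). Proof. apply HI. Qed.
Lemma Iopp a : I a -> I (- a).
Proof. intro H. rewrite <- scalN1. apply HI. exact H. Qed.
Lemma Iopp_inv a : I (- a) -> I a.
Proof. intro H. rewrite <- (oppK a). apply Iopp. exact H. Qed.

Definition eqI (a b : A) := I (a + - b).
Lemma eqI_refl a : eqI a a. Proof. unfold eqI. rewrite addrN. apply I0. Qed.
Lemma eqI_sym a b : eqI a b -> eqI b a.
Proof.
  unfold eqI. intro H. apply Iopp in H. rewrite oppD, oppK, addrC in H. exact H.
Qed.
Lemma eqI_trans a b c : eqI a b -> eqI b c -> eqI a c.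
Proof.
  unfold eqI. intros H1 H2. pose proof (IaddD _ _ H1 H2) as H.
  rewrite <- addrA, (addrA (- b) b), addNr, add0r in H. exact H.
Qed.
Lemma eqI_mulL a b c : eqI b c -> eqI (a * b) (a * c).
Proof. unfold eqI. intro H. rewrite <- mulrN, <- mulDr. apply ImulL. exact H. Qed.
Lemma eqI_mulR a b c : eqI b c -> eqI (b * a) (c * a).
Proof. unfold eqI. intro H. rewrite <- mulNr, <- mulDl. apply ImulR. exact H. Qed.
Lemma eqI_I a b : eqI a b -> I b -> I a.
Proof.
  unfold eqI. intros H1 H2. pose proof (IaddD _ _ H1 H2) as H.
  rewrite <- addrA, addNr, addr0 in H. exact H.
Qed.
Lemma eqI_sub a b : I b -> eqI (a + - b) a.
Proof.
  unfold eqI. intro H. rewrite addrC, addrA, addNr, add0r. apply Iopp. exact H.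
Qed.
End Alg.

Section KGL.
Variable k : nat.
Variable G : kg.
Hypothesis HG : is_kgraph G k.

Notation dom := (kdom G).
Notation rr := (kr G).
Notation ss := (ks G).
Notation cp := (kcomp G).
Notation dg := (kd G).

Lemma L_rs l : dom l -> Vertex G (rr l) /\ Vertex G (ss l).
Proof. destruct HG as [_ [_ [H _]]]. apply H. Qed.
Lemma L_vert v : Vertex G v -> rr v = v /\ ss v = v.
Proof. destruct HG as [_ [_ [_ [H _]]]]. apply H. Qed.
Lemma L_comp m n : dom m -> dom n -> ss m = rr n ->
  dom (cp m n) /\ rr (cp m n) = rr m /\ ss (cp m n) = ss n /\ dg (cp m n) = dadd (dg m) (dg n).
Proof. destruct HG as [_ [_ [_ [_ [H _]]]]]. apply H. Qed.
Lemma L_idl l : dom l -> cp (rr l) l = l.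
Proof. destruct HG as [_ [_ [_ [_ [_ [H _]]]]]]. apply H. Qed.
Lemma L_idr l : dom l -> cp l (ss l) = l.
Proof. destruct HG as [_ [_ [_ [_ [_ [H _]]]]]]. apply H. Qed.
Lemma L_assoc a b c : dom a -> dom b -> dom c -> ss a = rr b -> ss b = rr c ->
     cp (cp a b) c = cp a (cp b c).
Proof. destruct HG as [_ [_ [_ [_ [_ [_ [H _]]]]]]]. apply H. Qed.
Lemma L_fact l m n : dom l -> dg l = dadd m n ->
     (exists a b, dom a /\ dom b /\ ss a = rr b /\ dg a = m /\ dg b = n /\ l = cp a b).
Proof. destruct HG as [_ [_ [_ [_ [_ [_ [_ H]]]]]]]. intros. apply H; auto. Qed.
Lemma L_uniq l a b a' b' : dom l -> dom a -> dom b -> dom a' -> dom b' ->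
        ss a = rr b -> ss a' = rr b' -> dg a = dg a' -> dg b = dg b' ->
        l = cp a b -> l = cp a' b' -> a = a' /\ b = b'.
Proof.
  destruct HG as [_ [_ [_ [_ [_ [_ [_ H]]]]]]]. intros.
  assert (Hd : dg l = dadd (dg a) (dg b)) by (subst l; apply L_comp; auto).
  destruct (H l (dg a) (dg b) H0 Hd) as [_ Hu].
  eapply Hu; eauto.
Qed.

Lemma dom_v v : Vertex G v -> dom v. Proof. intros [H _]; exact H. Qed.
Lemma dom_r l : dom l -> dom (rr l). Proof. intro H. apply dom_v, L_rs, H. Qed.
Lemma dom_s l : dom l -> dom (ss l). Proof. intro H. apply dom_v, L_rs, H. Qed.
Lemma vert_r v : Vertex G v -> rr v = v. Proof. intro H. apply L_vert, H. Qed.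
Lemma vert_s v : Vertex G v -> ss v = v. Proof. intro H. apply L_vert, H. Qed.
Lemma ss_s l : dom l -> ss (ss l) = ss l. Proof. intro. apply vert_s, L_rs; auto. Qed.
Lemma rr_s l : dom l -> rr (ss l) = ss l. Proof. intro. apply vert_r, L_rs; auto. Qed.
Lemma ss_r l : dom l -> ss (rr l) = rr l. Proof. intro. apply vert_s, L_rs; auto. Qed.
Lemma rr_r l : dom l -> rr (rr l) = rr l. Proof. intro. apply vert_r, L_rs; auto. Qed.

Lemma dadd_cancel m n n' : dadd m n = dadd m n' -> n = n'.
Proof.
  intro H. apply functional_extensionality. intro i.
  apply (f_equal (fun f => f i)) in H. unfold dadd in H. lia.
Qed.

Lemma cancel_l x y y' : dom x -> dom y -> dom y' -> ss x = rr y -> ss x = rr y' ->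
  cp x y = cp x y' -> y = y'.
Proof.
  intros. assert (dg y = dg y').
  { apply (dadd_cancel (dg x)). destruct (L_comp x y) as [_ [_ [_ E1]]]; auto.
    destruct (L_comp x y') as [_ [_ [_ E2]]]; auto. rewrite <- E1, <- E2, H4. auto. }
  destruct (L_uniq (cp x y) x y x y') as [_ E]; auto. apply L_comp; auto.
Qed.

Lemma common_prefix x y x' y' : dom x -> dom y -> dom x' -> dom y' ->
  ss x = rr y -> ss x' = rr y' -> dg x = dg x' -> cp x y = cp x' y' -> x = x' /\ y = y'.
Proof.
  intros. assert (dg y = dg y').
  { apply (dadd_cancel (dg x)). destruct (L_comp x y) as [_ [_ [_ E1]]]; auto.
    destruct (L_comp x' y') as [_ [_ [_ E2]]]; auto. rewrite <- E1, H5, H6, E2. auto. }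
  eapply L_uniq with (l := cp x y); eauto. apply L_comp; auto.
Qed.

Lemma prefix x y (D : nat -> nat) : dom x -> dom y -> ss x = rr y ->
  (forall i, dg x i <= D i)%nat -> (forall i, D i <= dg (cp x y) i)%nat ->
  exists z c, dom z /\ dom c /\ ss x = rr z /\ ss z = rr c /\ dg (cp x z) = D /\
    cp x y = cp (cp x z) c.
Proof.
  intros Hx Hy Hxy H1 H2.
  destruct (L_comp x y) as [_ [_ [_ E]]]; auto. rewrite E in H2. unfold dadd in H2.
  destruct (L_fact y (fun i => D i - dg x i)%nat (fun i => dg y i + dg x i - D i)%nat)
    as [z [c' [Hz [Hc [Hzc [Ez [Ec Eyz]]]]]]]; auto.
  { apply functional_extensionality. intro i. unfold dadd. specialize (H1 i). specialize (H2 i). lia. }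
  exists z, c'. subst y.
  destruct (L_comp z c') as [_ [E1 _]]; auto.
  repeat split; auto.
  - congruence.
  - destruct (L_comp x z) as [_ [_ [_ E2]]]; auto. congruence.
    rewrite E2, Ez. apply functional_extensionality. intro i. unfold dadd. specialize (H1 i). lia.
  - symmetry. apply L_assoc; auto. congruence.
Qed.

Lemma vertex_deg0 y : dom y -> dg y = deg0 -> Vertex G y.
Proof. intros; split; auto. Qed.

Lemma comp_deg0 a y : dom a -> dom y -> ss a = rr y -> dg y = deg0 -> cp a y = a.
Proof.
  intros. assert (Vertex G y) by (apply vertex_deg0; auto).
  rewrite (vert_r y) in H1 by auto. subst y. apply L_idr; auto.
Qed.

Lemma MCE_sym m n p : MCE G m n p -> MCE G n m p.
Proof.
  intros [H1 [H2 [H3 H4]]]. repeat split; auto. rewrite H2.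
  apply functional_extensionality; intro i; unfold djoin; lia.
Qed.

Lemma MCE_orth a a' : dom a -> dom a' -> dg a = dg a' -> a <> a' -> forall x, ~ MCE G a a' x.
Proof.
  intros Ha Ha' Ed Hne x [Hx [Dx [[y [Hy [Ey Exy]]] [y' [Hy' [Ey' Exy']]]]]].
  apply Hne.
  assert (dg y = deg0).
  { apply (dadd_cancel (dg a)). destruct (L_comp a y) as [_ [_ [_ E]]]; auto.
    rewrite <- E, <- Exy, Dx, <- Ed. apply functional_extensionality; intro i.
    unfold djoin, dadd, deg0; lia. }
  assert (dg y' = deg0).
  { apply (dadd_cancel (dg a')). destruct (L_comp a' y') as [_ [_ [_ E]]]; auto.
    rewrite <- E, <- Exy', Dx, <- Ed. apply functional_extensionality; intro i.
    unfold djoin, dadd, deg0; lia. }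
  rewrite comp_deg0 in Exy by auto. rewrite comp_deg0 in Exy' by auto. congruence.
Qed.

Lemma MCE_ext_single l l' : dom l -> dom l' -> ss l = rr l' ->
  forall q, MCE G (cp l l') l q <-> q = cp l l'.
Proof.
  intros Hl Hl' E q. destruct (L_comp l l') as [Hd [Er [Es Ed]]]; auto. split.
  - intros [Hq [Dq [[a [Ha [Ea Eqa]]] _]]].
    assert (dg a = deg0).
    { apply (dadd_cancel (dg (cp l l'))). destruct (L_comp (cp l l') a) as [_ [_ [_ E2]]]; auto.
      rewrite <- E2, <- Eqa, Dq, Ed. apply functional_extensionality; intro i.
      unfold djoin, dadd, deg0; lia. }
    rewrite comp_deg0 in Eqa; auto.
  - intro Eq. subst q. repeat split; auto.
    + rewrite Ed. apply functional_extensionality; intro i. unfold djoin, dadd; lia.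
    + exists (ss (cp l l')). repeat split. apply dom_s; auto. rewrite rr_s; auto.
      rewrite L_idr; auto.
    + exists l'. auto.
Qed.

End KGL.

Lemma exists_nodup (T : Type) (L : list T) :
  exists L0, NoDup L0 /\ forall x, In x L <-> In x L0.
Proof.
  induction L as [|a L IH].
  - exists nil. split. constructor. tauto.
  - destruct IH as [L0 [Hn He]]. destruct (classic (In a L0)).
    + exists L0. split; auto. intro x. simpl. rewrite He. split; [intros [->|]|]; auto.
    + exists (a :: L0). split. constructor; auto. intro x. simpl. rewrite He. tauto.
Qed.

Lemma cc1 (x : Cplx) : Cmod x = 1%R -> Cmul x (Cconj x) = Defs.C1.
Proof.
  unfold Cmod. intro H. destruct x as [a b]; simpl in *.
  assert (Hp : (0 <= a * a + b * b)%R) by nra.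
  pose proof (sqrt_sqrt _ Hp) as E. rewrite H in E.
  unfold Cmul, Cconj, Defs.C1; simpl. f_equal; nra.
Qed.

Section TCKL.
Variable k : nat.
Variable G : kg.
Hypothesis HG : is_kgraph G k.
Variable c : kM G -> kM G -> Cplx.
Hypothesis Hc : cocycle G c.
Variable A : CStar.
Variable s : kM G -> A.
Hypothesis Ht : TCK_family G A c s.
Variable I : A -> Prop.
Hypothesis HI : closed_ideal A I.

Local Open Scope cs_scope.
Notation dom := (kdom G).
Notation rr := (kr G).
Notation ss := (ks G).
Notation cp := (kcomp G).
Notation dg := (kd G).
Notation st := cs_star.
Notation p := (proj_of G A s).

Lemma T_v v : Vertex G v -> s v * s v = s v /\ st (s v) = s v.
Proof. destruct Ht as [H _]. apply H. Qed.
Lemma T_comp m n : dom m -> dom n -> ss m = rr n -> s m * s n = cs_scal (c m n) (s (cp m n)).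
Proof. destruct Ht as [_ [_ [H _]]]. apply H. Qed.
Lemma T_ss l : dom l -> st (s l) * s l = s (ss l).
Proof. destruct Ht as [_ [_ [_ [H _]]]]. apply H. Qed.
Lemma T_mce m n : dom m -> dom n -> sum_over G A (MCE G m n) p (p m * p n).
Proof. destruct Ht as [_ [_ [_ [_ H]]]]. apply H. Qed.

Lemma c_r l : dom l -> c (rr l) l = Defs.C1. Proof. destruct Hc as [_ [_ H]]. apply H. Qed.
Lemma c_s l : dom l -> c l (ss l) = Defs.C1. Proof. destruct Hc as [_ [_ H]]. apply H. Qed.
Lemma c_mod m n : dom m -> dom n -> ss m = rr n -> Cmod (c m n) = 1%R.
Proof. destruct Hc as [H _]. apply H. Qed.

Lemma s_rl l : dom l -> s (rr l) * s l = s l.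
Proof.
  intro H. rewrite T_comp.
  - rewrite c_r, cs_scal1, (L_idl _ _ HG); auto.
  - apply (dom_r _ _ HG); auto.
  - auto.
  - apply (ss_r _ _ HG); auto.
Qed.
Lemma s_ls l : dom l -> s l * s (ss l) = s l.
Proof.
  intro H. rewrite T_comp.
  - rewrite c_s, cs_scal1, (L_idr _ _ HG); auto.
  - auto.
  - apply (dom_s _ _ HG); auto.
  - symmetry; apply (rr_s _ _ HG); auto.
Qed.
Lemma vstar v : Vertex G v -> st (s v) = s v. Proof. apply T_v. Qed.
Lemma st_rl l : dom l -> st (s l) * s (rr l) = st (s l).
Proof.
  intro H. rewrite <- (vstar (rr l)) by (apply (L_rs _ _ HG); eauto).
  rewrite <- starM, s_rl; auto.
Qed.
Lemma st_ls l : dom l -> s (ss l) * st (s l) = st (s l).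
Proof.
  intro H. rewrite <- (vstar (ss l)) by (apply (L_rs _ _ HG); eauto).
  rewrite <- starM, s_ls; auto.
Qed.
Lemma p_def l : p l = s l * st (s l). Proof. reflexivity. Qed.
Lemma p_star l : st (p l) = p l.
Proof. rewrite p_def, starM, starK. reflexivity. Qed.
Lemma p_s l : dom l -> p l * s l = s l.
Proof. intro. rewrite p_def, <- mulA, T_ss, s_ls; auto. Qed.
Lemma st_p l : dom l -> st (s l) * p l = st (s l).
Proof. intro. rewrite p_def, mulA, T_ss, st_ls; auto. Qed.
Lemma p_idem l : dom l -> p l * p l = p l.
Proof. intro. rewrite (p_def l) at 2. rewrite mulA, p_s; auto. Qed.
Lemma v_p m : dom m -> s (rr m) * p m = p m.
Proof. intro. rewrite p_def, mulA, s_rl; auto. Qed.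
Lemma p_v m : dom m -> p m * s (rr m) = p m.
Proof. intro. rewrite p_def, <- mulA, st_rl; auto. Qed.

Lemma sum_selfadj (L : list (kM G)) :
  st (fold_right (fun m acc => p m + acc) 0 L) = fold_right (fun m acc => p m + acc) 0 L.
Proof. induction L; simpl. apply star0. rewrite starD, IHL, p_star. reflexivity. Qed.

Lemma p_comm m n : dom m -> dom n -> p m * p n = p n * p m.
Proof.
  intros. destruct (T_mce m n) as [L [_ [_ E]]]; auto.
  rewrite E, <- sum_selfadj, <- E, starM, !p_star. reflexivity.
Qed.
Lemma p_orth m n : dom m -> dom n -> (forall x, ~ MCE G m n x) -> p m * p n = 0.
Proof.
  intros. destruct (T_mce m n) as [L [_ [He E]]]; auto.
  destruct L as [|x L]. exact E. exfalso. apply (H1 x). apply He. left; auto.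
Qed.
Lemma p_single m n : dom m -> dom n -> (forall q, MCE G m n q <-> q = m) -> p m * p n = p m.
Proof.
  intros. destruct (T_mce m n) as [L [Hn [He E]]]; auto.
  destruct L as [|x L]. exfalso. apply (proj1 (He m)). apply H1; auto.
  assert (x = m) by (apply H1, He; left; auto). subst x.
  destruct L as [|y L]. rewrite E; simpl; apply addr0.
  exfalso. inversion Hn; subst. apply H4. assert (y = m) by (apply H1, He; right; left; auto).
  subst; left; auto.
Qed.

Lemma p_comp l g : dom l -> dom g -> ss l = rr g -> p (cp l g) = s l * p g * st (s l).
Proof.
  intros. rewrite !p_def.
  assert (E : s l * (s g * st (s g)) * st (s l) = (s l * s g) * st (s l * s g)).
  { rewrite starM, !mulA. reflexivity. }
  rewrite E, T_comp, cs_starZ, scal_mul2, cc1, cs_scal1; auto. apply c_mod; auto.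
Qed.

Definition f (v m : kM G) : A := s v + - p m.
Fixpoint Q (v : kM G) (L : list (kM G)) : A :=
  match L with nil => s v | m :: L' => f v m * Q v L' end.

Definition gd (v m : kM G) : Prop := dom m /\ rr m = v.

Lemma AC4 (a b c0 d : A) : a + b + (c0 + d) = a + c0 + (b + d).
Proof.
  rewrite <- !addrA. f_equal. rewrite !addrA. f_equal. apply addrC.
Qed.

Lemma f_mul v m n : Vertex G v -> gd v m -> gd v n ->
  f v m * f v n = s v + - p n + (- p m + p m * p n).
Proof.
  intros Hv [Hm Em] [Hn En]. unfold f.
  rewrite mulDl, !mulDr, (proj1 (T_v v Hv)), mulrN, mulNr, mulNr, mulrN, oppK.
  assert (E1 : s v * p n = p n) by (rewrite <- En; apply v_p; auto).
  assert (E2 : p m * s v = p m) by (rewrite <- Em; apply p_v; auto).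
  rewrite E1, E2. rewrite !addrA. reflexivity.
Qed.
Lemma f_comm v m n : Vertex G v -> gd v m -> gd v n -> f v m * f v n = f v n * f v m.
Proof.
  intros. rewrite !f_mul; auto. rewrite p_comm by (apply H0 || apply H1).
  rewrite AC4. reflexivity.
Qed.
Lemma f_idem v m : Vertex G v -> gd v m -> f v m * f v m = f v m.
Proof.
  intros. rewrite f_mul, p_idem, addNr, addr0; auto. apply H0.
Qed.
Lemma vf v m : Vertex G v -> gd v m -> s v * f v m = f v m.
Proof.
  intros Hv [Hm Em]. unfold f. rewrite mulDr, mulrN, (proj1 (T_v v Hv)).
  rewrite <- Em at 2. rewrite v_p; auto.
Qed.
Lemma fv v m : Vertex G v -> gd v m -> f v m * s v = f v m.
Proof.
  intros Hv [Hm Em]. unfold f. rewrite mulDl, mulNr, (proj1 (T_v v Hv)).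
  rewrite <- Em at 2. rewrite p_v; auto.
Qed.

Lemma vQ v L : Vertex G v -> Forall (gd v) L -> s v * Q v L = Q v L.
Proof.
  intros Hv H. destruct L as [|m L]; simpl. apply T_v; auto.
  rewrite mulA, vf; auto. inversion H; auto.
Qed.
Lemma Qv v L : Vertex G v -> Forall (gd v) L -> Q v L * s v = Q v L.
Proof.
  intros Hv H. induction L as [|m L IH]; simpl. apply T_v; auto.
  inversion H; subst. rewrite <- mulA, IH; auto.
Qed.
Lemma prod_Q v L : Vertex G v -> Forall (gd v) L -> prod_list G A (f v) (s v) L = Q v L.
Proof.
  intros Hv H. induction L as [|m L IH]. reflexivity.
  inversion H; subst. destruct L as [|m' L].
  - simpl. rewrite fv; auto.
  - change (prod_list G A (f v) (s v) (m :: m' :: L)) with (f v m * prod_list G A (f v) (s v) (m' :: L)).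
    rewrite IH; auto.
Qed.

Lemma Q_perm v L L' : Vertex G v -> Permutation L L' -> Forall (gd v) L -> Q v L = Q v L'.
Proof.
  intros Hv HP. induction HP; intro HF; simpl; auto.
  - inversion HF; subst. rewrite IHHP; auto.
  - inversion HF; subst. inversion H2; subst. rewrite !mulA, f_comm; auto.
  - rewrite IHHP1, IHHP2; auto. rewrite Forall_forall in *. intros z Hz.
    apply HF. apply Permutation_in with l'; auto. apply Permutation_sym; auto.
Qed.

Lemma Q_dup v x L : Vertex G v -> In x L -> Forall (gd v) L -> Q v (x :: L) = Q v L.
Proof.
  intros Hv Hin HF. apply in_split in Hin. destruct Hin as [l1 [l2 ->]].
  assert (HP : Permutation (l1 ++ x :: l2) (x :: l1 ++ l2)) by (apply Permutation_sym, Permutation_middle).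
  change (Q v (x :: l1 ++ x :: l2)) with (f v x * Q v (l1 ++ x :: l2)).
  rewrite (Q_perm v _ _ Hv HP HF). simpl. rewrite mulA, f_idem; auto.
  rewrite Forall_forall in HF. apply HF. apply in_or_app; right; left; auto.
Qed.

Lemma Q_nodup v L : Vertex G v -> Forall (gd v) L ->
  exists L0, NoDup L0 /\ (forall x, In x L <-> In x L0) /\ Q v L = Q v L0.
Proof.
  intros Hv. induction L as [|a L IH]; intro HF.
  - exists nil. repeat split; auto. constructor.
  - inversion HF; subst. destruct IH as [L0 [Hn [He EQ]]]; auto.
    assert (HF0 : Forall (gd v) L0).
    { rewrite Forall_forall in *. intros z Hz. apply H2, He, Hz. }
    destruct (classic (In a L0)).
    + exists L0. repeat split; auto.
      * intro Hx. destruct Hx; subst; auto. apply He; auto.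
      * intro; right; apply He; auto.
      * simpl. rewrite EQ. apply (Q_dup v a L0); auto.
    + exists (a :: L0). repeat split.
      * constructor; auto.
      * intros [->|Hx]; [left|right]; auto. apply He; auto.
      * intros [->|Hx]; [left|right]; auto. apply He; auto.
      * simpl. rewrite EQ; auto.
Qed.

Lemma Q_seteq v L L' : Vertex G v -> Forall (gd v) L ->
  (forall x, In x L <-> In x L') -> Q v L = Q v L'.
Proof.
  intros Hv HF He.
  assert (HF' : Forall (gd v) L').
  { rewrite Forall_forall in *. intros z Hz. apply HF, He, Hz. }
  destruct (Q_nodup v L Hv HF) as [L0 [Hn0 [He0 E0]]].
  destruct (Q_nodup v L' Hv HF') as [L1 [Hn1 [He1 E1]]].
  rewrite E0, E1. apply Q_perm; auto.
  - apply NoDup_Permutation; auto. intro x. rewrite <- He0, <- He1. auto.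
  - rewrite Forall_forall in *. intros z Hz. apply HF, He0, Hz.
Qed.

Lemma Q_app v L1 L2 : Vertex G v -> Forall (gd v) L2 -> Q v (L1 ++ L2) = Q v L1 * Q v L2.
Proof.
  intros Hv HF. induction L1 as [|m L1 IH]; simpl.
  - rewrite vQ; auto.
  - rewrite IH, mulA. reflexivity.
Qed.

Lemma Q_drop v x L : Vertex G v -> I (p x) -> Forall (gd v) L -> eqI I (Q v (x :: L)) (Q v L).
Proof.
  intros Hv Hp HF. simpl. unfold f. rewrite mulDl, vQ, mulNr; auto.
  unfold eqI. rewrite addrC, addrA, addNr, add0r. apply (Iopp I HI). apply (ImulR I HI); auto.
Qed.

Lemma Q_filter v (b : kM G -> bool) L : Vertex G v -> Forall (gd v) L ->
  (forall m, In m L -> b m = false -> I (p m)) -> eqI I (Q v L) (Q v (filter b L)).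
Proof.
  intros Hv. induction L as [|m L IH]; intros HF Hb; simpl.
  - apply eqI_refl; auto.
  - inversion HF; subst. assert (IH' := IH H2 (fun z Hz => Hb z (or_intror Hz))).
    destruct (b m) eqn:Eb.
    + simpl. apply eqI_mulL; auto.
    + eapply eqI_trans; eauto. apply Q_drop; auto. apply Hb; auto. left; auto.
Qed.


Lemma Q_map_comp l L : dom l -> Forall (gd (ss l)) L ->
  Q (rr l) (map (cp l) L) = f (rr l) l + s l * Q (ss l) L * st (s l).
Proof.
  intros Hl HF. assert (Hw : Vertex G (ss l)) by (apply (L_rs _ _ HG); auto).
  assert (Hv : Vertex G (rr l)) by (apply (L_rs _ _ HG); auto).
  induction L as [|g L IH]; simpl.
  - unfold f. rewrite s_ls; auto. rewrite <- p_def, <- addrA, addNr, addr0. reflexivity.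
  - inversion HF as [|? ? [Hg Eg] HF']; subst. rewrite IH; auto.
    unfold f at 1. rewrite p_comp; auto.
    (* (s v - s_l p_g s_l^* ) (f_l + s_l Q s_l^* ) *)
    assert (E1 : s (rr l) * f (rr l) l = f (rr l) l) by (apply vf; auto; split; auto).
    assert (E2 : s (rr l) * (s l * Q (ks G l) L * st (s l)) = s l * Q (ks G l) L * st (s l))
      by (rewrite !mulA, s_rl; auto).
    assert (E3 : st (s l) * f (rr l) l = 0).
    { unfold f. rewrite mulDr, mulrN, st_rl, st_p, addrN; auto. }
    assert (E4 : s l * p g * st (s l) * (s l * Q (ks G l) L * st (s l)) = s l * (p g * Q (ks G l) L) * st (s l)).
    { rewrite <- !mulA. f_equal. rewrite !mulA. f_equal. rewrite <- !mulA. rewrite (mulA (st (s l)) (s l)), T_ss; auto.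
      rewrite vQ; auto. }
    rewrite mulDl, !mulDr, E1, E2, mulNr, mulNr.
    replace (s l * p g * st (s l) * f (rr l) l) with (cs_zero : A)
      by (rewrite <- mulA, E3, mulr0; reflexivity).
    rewrite E4, opp0, add0r, <- addrA. f_equal.
    unfold f. rewrite mulDl, mulNr, vQ, mulDr, mulDl, mulrN, mulNr; auto.
Qed.

Definition sumP (L : list (kM G)) : A := fold_right (fun m acc => p m + acc) cs_zero L.

Lemma f_pl v l m : Vertex G v -> gd v l -> gd v m -> f v m * p l = p l * f v m.
Proof.
  intros Hv [Hl El] [Hm Em]. unfold f. rewrite mulDl, mulDr, mulNr, mulrN.
  rewrite p_comm with (m := m) (n := l); auto.
  rewrite <- El at 1. rewrite v_p; auto. rewrite <- El. rewrite p_v; auto.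
Qed.

Lemma conj_Q l L : dom l -> Forall (gd (rr l)) L ->
  st (s l) * Q (rr l) L * s l =
  fold_right (fun m acc => (st (s l) * f (rr l) m * s l) * acc) (s (ss l)) L.
Proof.
  intros Hl HF. assert (Hv : Vertex G (rr l)) by (apply (L_rs _ _ HG); auto).
  induction L as [|m L IH]; simpl.
  - rewrite st_rl, T_ss; auto.
  - inversion HF; subst. rewrite <- IH; auto.
    assert (R : st (s l) * f (rr l) m * s l * (st (s l) * Q (rr l) L * s l) =
                st (s l) * (f (rr l) m * p l) * Q (rr l) L * s l)
      by (rewrite p_def; rewrite !mulA; reflexivity).
    rewrite R, f_pl, (mulA (st (s l)) (p l)), st_p, !mulA; auto. split; auto.
Qed.

Lemma conj_f l m : dom l ->
  st (s l) * f (rr l) m * s l = s (ss l) + - (st (s l) * p m * s l).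
Proof.
  intro Hl. unfold f. rewrite mulDr, mulDl, st_rl, T_ss, mulrN, mulNr; auto.
Qed.

Lemma conj_p l m (M : list (kM G)) (ch : kM G -> kM G) : dom l -> dom m ->
  p l * p m = sumP M ->
  (forall q, In q M -> dom (ch q) /\ ss l = rr (ch q) /\ q = cp l (ch q)) ->
  st (s l) * p m * s l = sumP (map ch M).
Proof.
  intros Hl Hm E Hch. rewrite <- (st_p l) at 1 by auto. rewrite <- (mulA (st (s l))), E.
  unfold sumP. rewrite mul_sum_l, mul_sum_r.
  clear E. induction M as [|q M IH]; simpl. reflexivity.
  rewrite IH by (intros; apply Hch; right; auto).
  destruct (Hch q (or_introl eq_refl)) as [Ha [Ea Eq]]. f_equal.
  set (a := ch q) in *. rewrite Eq, p_comp; auto. rewrite !mulA, T_ss; auto. rewrite <- !mulA, T_ss; auto.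
  rewrite Ea, p_v; auto. rewrite v_p; auto.
Qed.

Lemma sum_v w L : Forall (gd w) L -> s w * sumP L = sumP L.
Proof.
  intro HF. unfold sumP. rewrite mul_sum_l. induction L as [|a L IH]; simpl; auto.
  inversion HF as [|? ? [Ha Ea] HF']; subst. rewrite IH, v_p; auto.
Qed.

Lemma sum_orth a L : (forall b, In b L -> p a * p b = cs_zero) -> p a * sumP L = cs_zero.
Proof.
  intro H. unfold sumP. rewrite mul_sum_l. induction L as [|b L IH]; simpl; auto.
  rewrite H, add0r; [apply IH; intros; apply H; right; auto | left; auto].
Qed.

Lemma orth_Q w L : Vertex G w -> Forall (gd w) L -> NoDup L ->
  (forall a b, In a L -> In b L -> a <> b -> p a * p b = cs_zero) ->
  s w + - sumP L = Q w L.
Proof.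
  intros Hw HF Hn Ho. induction L as [|a L IH]; simpl.
  - unfold sumP; simpl. rewrite opp0, addr0. reflexivity.
  - inversion HF as [|? ? Ga HF']; subst. inversion Hn; subst.
    rewrite <- IH; auto. 2: { intros; apply Ho; auto; right; auto. }
    unfold f. rewrite mulDl, !mulDr, (proj1 (T_v w Hw)). repeat rewrite ?mulNr, ?mulrN, ?oppK.
    rewrite sum_v; auto. destruct Ga as [Ha Ea].
    assert (Epa : p a * s w = p a) by (rewrite <- Ea; apply p_v; auto). rewrite Epa.
    assert (E0 : p a * sumP L = cs_zero).
    { apply sum_orth. intros b Hb. apply Ho; [left; auto|right; auto|].
      intro; subst; contradiction. }
    rewrite E0, addr0. rewrite oppD. rewrite <- !addrA. f_equal. apply addrC.
Qed.

Lemma Q_fold_app w (F : kM G -> list (kM G)) L : Vertex G w ->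
  (forall m, In m L -> Forall (gd w) (F m)) ->
  fold_right (fun m acc => Q w (F m) * acc) (s w) L = Q w (flat_map F L).
Proof.
  intros Hw HF. induction L as [|m L IH]; simpl; auto.
  rewrite Q_app, IH; auto.
  - intros; apply HF; right; auto.
  - rewrite Forall_forall. intros z Hz. apply in_flat_map in Hz. destruct Hz as [m' [Hm' Hz]].
    specialize (HF m' (or_intror Hm')). rewrite Forall_forall in HF. auto.
Qed.

Variable calE : (kM G -> Prop) -> Prop.
Hypothesis Hsat : satiated G calE.
Hypothesis HCK : forall E v, calE E -> FEat G E v -> Delta_is G A s v E cs_zero.

Let H := H_of G A s I.
Let Gr := restrict G H.

Ltac ptw i := repeat match goal with Hx : @eq (nat -> nat) ?a ?b |- _ =>
  let H' := fresh "P" in pose proof (f_equal (fun h => h i) Hx) as H'; simpl in H'; clear Hx end.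

Lemma bdec (P : Prop) : {P} + {~ P}.
Proof. apply excluded_middle_informative. Qed.
Definition nb (P : kM G -> Prop) (m : kM G) : bool := if bdec (P m) then false else true.
Lemma nb_true (P : kM G -> Prop) m : nb P m = true <-> ~ P m.
Proof. unfold nb. destruct (bdec (P m)); split; intro; try discriminate; tauto. Qed.
Lemma nb_false (P : kM G -> Prop) m : nb P m = false -> P m.
Proof. unfold nb. destruct (bdec (P m)); auto; discriminate. Qed.

Lemma I_s l : dom l -> I (s (ss l)) -> I (s l).
Proof. intros. rewrite <- s_ls; auto. apply (ImulL I HI); auto. Qed.
Lemma I_p l : dom l -> I (s (ss l)) -> I (p l).
Proof. intros. rewrite p_def. apply (ImulR I HI). apply I_s; auto. Qed.
Lemma heredI l : dom l -> I (s (rr l)) -> I (s (ss l)).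
Proof.
  intros. rewrite <- T_ss; auto. apply (ImulL I HI). rewrite <- s_rl; auto. apply (ImulR I HI); auto.
Qed.
Lemma hered : hereditary G H.
Proof.
  intros l Hl [Hv Hi]. split. apply (L_rs _ _ HG); auto. apply heredI; auto.
Qed.
Lemma hered' l : dom l -> ~ H (ss l) -> ~ H (rr l).
Proof. intros Hl Hn Hr. apply Hn, hered; auto. Qed.
Lemma H_p l : dom l -> H (ss l) -> I (p l).
Proof. intros Hl [_ Hi]. apply I_p; auto. Qed.

Lemma Forall_In (T : Type) (P : T -> Prop) L : (forall x, In x L -> P x) -> Forall P L.
Proof. intro. rewrite Forall_forall. auto. Qed.

Lemma Esat : E_saturated G calE H.
Proof.
  intros E v HE Hfe Hsrc. destruct (HCK E v HE Hfe) as [L [Hn [He E0]]].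
  destruct Hfe as [Hv [_ [Hel _]]]. split; auto.
  assert (HF : Forall (gd v) L).
  { apply Forall_In. intros m Hm. apply He in Hm. destruct (Hel m Hm) as [? [? _]]. split; auto. }
  assert (EQ : cs_zero = Q v L) by (rewrite E0; apply prod_Q; auto).
  assert (Hq := Q_filter v (fun _ => false) L Hv HF).
  replace (filter (fun _ : kM G => false) L) with (@nil (kM G)) in Hq
    by (clear; induction L; simpl; auto).
  simpl in Hq. rewrite <- EQ in Hq.
  assert (eqI I cs_zero (s v)).
  { apply Hq. intros m Hm _. apply He in Hm. apply H_p. apply Hel; auto. apply Hsrc; auto. }
  unfold eqI in H0. rewrite add0r in H0. apply (Iopp_inv I HI); auto.
Qed.

Lemma domr l : kdom Gr l <-> dom l /\ ~ H (ss l).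
Proof. reflexivity. Qed.
Lemma Vr v : Vertex Gr v <-> Vertex G v /\ ~ H v.
Proof.
  split.
  - intros [[Hd Hn] Hdg]. assert (Vertex G v) by (split; auto). split; auto.
    rewrite (vert_s _ _ HG) in Hn; auto.
  - intros [Hv Hn]. split; [split|]. apply Hv. rewrite (vert_s _ _ HG); auto. apply Hv.
Qed.

Lemma MCEr m n q : dom m -> dom n -> (MCE Gr m n q <-> MCE G m n q /\ ~ H (ss q)).
Proof.
  intros Hm Hn. split.
  - intros [[Hq Hh] [Dq [[a [[Ha _] [Ea Eq]]] [b [[Hb _] [Eb Eqb]]]]]].
    repeat split; auto. exists a; auto. exists b; auto.
  - intros [[Hq [Dq [[a [Ha [Ea Eq]]] [b [Hb [Eb Eqb]]]]]] Hh].
    split; [split; auto|]. split; auto. split.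
    + exists a. split; auto. split; auto.
      destruct (L_comp _ _ HG m a) as [_ [_ [E _]]]; auto. rewrite <- E, <- Eq. auto.
    + exists b. split; auto. split; auto.
      destruct (L_comp _ _ HG n b) as [_ [_ [E _]]]; auto. rewrite <- E, <- Eqb. auto.
Qed.

Lemma FEr_el F v m : FEat Gr F v -> F m -> dom m /\ ~ H (ss m) /\ rr m = v /\ ~ Vertex Gr m.
Proof. intros [_ [_ [Hel _]]] Fm. destruct (Hel m Fm) as [[? ?] [? ?]]. auto. Qed.
Lemma FEr_gd F v L : FEat Gr F v -> (forall m, F m <-> In m L) -> Forall (gd v) L.
Proof.
  intros Hfe He. apply Forall_In. intros m Hm. apply He in Hm.
  destruct (FEr_el F v m Hfe Hm) as [? [_ [? _]]]. split; auto.
Qed.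
Lemma FEr_V F v : FEat Gr F v -> Vertex G v /\ ~ H v.
Proof. intros [Hv _]. apply Vr; auto. Qed.
Lemma FEr_ne F v : FEat Gr F v -> exists m, F m.
Proof.
  intros Hfe. destruct Hfe as [Hv [_ [_ Hex]]].
  destruct (Hex v) as [m [Fm _]]; eauto. apply Hv. apply Vr in Hv. apply (vert_r _ _ HG), Hv.
Qed.
Lemma FEr_uniq F v v' : FEat Gr F v -> FEat Gr F v' -> v = v'.
Proof.
  intros H1 H2. destruct (FEr_ne F v H1) as [m Fm].
  destruct (FEr_el F v m H1 Fm) as [_ [_ [E1 _]]]. destruct (FEr_el F v' m H2 Fm) as [_ [_ [E2 _]]].
  congruence.
Qed.

Definition BB := B_of G A s I H.

Lemma B_get F v L : BB F -> FEat Gr F v -> (forall m, F m <-> In m L) -> I (Q v L).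
Proof.
  intros [_ [v' [Hfe' [x [[L0 [Hn [He Ex]]] Ix]]]]] Hfe HL.
  assert (v' = v) by (eapply FEr_uniq; eauto). subst v'.
  destruct (FEr_V F v Hfe) as [Hv _].
  assert (HF0 := FEr_gd F v L0 Hfe He).
  assert (x = Q v L0) by (rewrite <- prod_Q; auto).
  rewrite (Q_seteq v L L0); auto. congruence.
  eapply FEr_gd; eauto. intro y. rewrite <- HL, <- He. tauto.
Qed.

Lemma B_make F v L : FEat Gr F v -> (forall m, F m <-> In m L) -> I (Q v L) -> BB F.
Proof.
  intros Hfe He HQ. split. exists v; auto. exists v. split; auto.
  destruct (FEr_V F v Hfe) as [Hv _].
  assert (HF := FEr_gd F v L Hfe He).
  destruct (Q_nodup v L Hv HF) as [L0 [Hn [He0 E0]]].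
  exists (Q v L0). split. exists L0. split; auto. split.
  intro m. rewrite He. auto. symmetry. apply prod_Q; auto.
  apply Forall_In. intros x Hx. rewrite Forall_forall in HF. apply HF, He0, Hx.
  rewrite <- E0; auto.
Qed.

Lemma H_dec_list (L : list (kM G)) (P : kM G -> Prop) :
  forall m, In m (filter (nb P) L) <-> In m L /\ ~ P m.
Proof. intro m. rewrite filter_In, nb_true. tauto. Qed.

Lemma dadd_le (a b : nat -> nat) i : (a i <= dadd a b i)%nat.
Proof. unfold dadd. lia. Qed.

Lemma part4 F : E_of G calE H F -> BB F.
Proof.
  intros [E [v [HE [Hfe [Hnv EF]]]]]. subst F.
  destruct (HCK E v HE Hfe) as [L [Hn [He E0]]].
  pose proof Hfe as Hfe0.
  destruct Hfe as [Hv [_ [Hel Hex]]].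
  set (F := fun m => E m /\ ~ H (ss m)).
  assert (HFL : forall m, F m <-> In m (filter (nb (fun m => H (ss m))) L)).
  { intro m. rewrite H_dec_list, <- He. unfold F. tauto. }
  assert (HFe : FEat Gr F v).
  { split; [apply Vr; auto|]. split; [exists (filter (nb (fun m => H (ss m))) L); auto|].
    split.
    - intros m [Em Hm]. destruct (Hel m Em) as [Hd [Er Hnv']]. split; [split; auto|]. split; auto.
      intro Hvr. apply Hnv'. apply Vr in Hvr. apply Hvr.
    - intros l [Hl Hlh] Er.
      destruct (classic (exists m a, E m /\ dom a /\ ss m = rr a /\ l = cp m a)) as [Hin|Hnin].
      + destruct Hin as [m [a [Em [Ha [Ema El]]]]].
        destruct (Hel m Em) as [Hm _].
        destruct ((L_comp _ _ HG) m a) as [_ [_ [Es Ed]]]; auto.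
        exists m. split. split; auto.
        { rewrite Ema. apply hered'; auto. rewrite El, Es in Hlh; auto. }
        exists l. apply MCEr; auto. split; auto.
        split; auto. split.
        { rewrite El, Ed. apply functional_extensionality; intro i. unfold djoin, dadd. lia. }
        split.
        { exists (ss l). split. apply (dom_s _ _ HG); auto. split. rewrite (rr_s _ _ HG); auto.
          rewrite (L_idr _ _ HG); auto. }
        { exists a. auto. }
      + destruct Hsat as [HsFE [_ [HS2 _]]].
        assert (HX : calE (Ext G l E)).
        { eapply HS2; eauto. }
        destruct (HsFE _ HX) as [w Hw].
        assert (Ew : w = ss l).
        { destruct Hw as [Hwv [_ [Hwel Hwex]]].
          destruct (Hwex w) as [a [Xa _]]. apply Hwv. apply (vert_r _ _ HG); auto.
          destruct (Hwel a Xa) as [_ [Ea' _]]. destruct Xa as [m [Em [Ha [Ea _]]]]. congruence. }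
        subst w.
        destruct (classic (exists a, Ext G l E a /\ ~ H (ss a))) as [[a [Xa Ha']]|Hno].
        * destruct Xa as [m [Em [Ha [Ea Hmce]]]].
          destruct (Hel m Em) as [Hm _].
          destruct ((L_comp _ _ HG) l a) as [_ [_ [Es _]]]; auto.
          exists m. split.
          -- split; auto. destruct Hmce as [_ [_ [_ [b [Hb [Eb Eqb]]]]]].
             destruct ((L_comp _ _ HG) m b) as [_ [_ [Es2 _]]]; auto.
             rewrite Eb. apply hered'; auto. rewrite <- Es2, <- Eqb, Es. auto.
          -- exists (cp l a). apply MCEr; auto. split; auto. rewrite Es; auto.
        * exfalso. apply Hlh. apply (Esat (Ext G l E) (ss l)); auto.
          intros a Xa. apply NNPP. intro. apply Hno. exists a; auto.
  }
  apply (B_make F v (filter (nb (fun m => H (ss m))) L)); auto.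
  assert (HF : Forall (gd v) L).
  { apply Forall_In. intros m Hm. apply He in Hm. destruct (Hel m Hm) as [? [? _]]. split; auto. }
  assert (EQ : cs_zero = Q v L) by (rewrite E0; apply prod_Q; auto).
  assert (Hq := Q_filter v (nb (fun m => H (ss m))) L Hv HF).
  rewrite <- EQ in Hq. assert (Hq' : eqI I cs_zero (Q v (filter (nb (fun m => H (ss m))) L))).
  { apply Hq. intros m Hm Hb. apply nb_false in Hb. apply H_p; auto. apply Hel, He; auto. }
  unfold eqI in Hq'. rewrite add0r in Hq'. apply (Iopp_inv I HI); auto.
Qed.

Lemma partS1 F v l : BB F -> FEat Gr F v -> kdom Gr l -> rr l = v -> l <> v ->
  BB (fun m => F m \/ m = l).
Proof.
  intros HB Hfe [Hl Hlh] Er Hne.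
  pose proof Hfe as Hfe0. destruct Hfe as [Hv [[LF HLF] [Hel Hex]]].
  assert (HN : FEat Gr (fun m => F m \/ m = l) v).
  { split; auto. split. exists (l :: LF). intro x. simpl. rewrite HLF.
    split; (intros [Hx|Hx]; [right; auto|left; auto]).
    split.
    - intros m [Fm| ->]. apply Hel; auto. split; [split; auto|]. split; auto.
      intro Hvl. apply Vr in Hvl. apply Hne. rewrite <- Er. symmetry. apply (vert_r _ _ HG), Hvl.
    - intros x Hx Ex. destruct (Hex x Hx Ex) as [m [Fm Hm]]. exists m; auto. }
  apply (B_make _ v (l :: LF)); auto.
  - intro x. simpl. rewrite HLF. split; (intros [Hx|Hx]; [right; auto|left; auto]).
  - simpl. apply (ImulL I HI). apply (B_get F v LF); auto.
Qed.

Lemma partS3 F l l' : BB F -> F l -> kdom Gr l' -> ss l = rr l' -> F (cp l l') -> l' <> ss l ->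
  BB (fun m => F m /\ m <> cp l l').
Proof.
  intros HB Fl [Hl' Hl'h] Ecomp Fll' Hne.
  pose proof HB as HB0. destruct HB as [_ [v [Hfe _]]]. pose proof Hfe as Hfe0.
  destruct Hfe as [Hv [[LF HLF] [Hel Hex]]].
  destruct (Hel l Fl) as [[Hl Hlh] [Erl _]].
  destruct ((L_comp _ _ HG) l l') as [Hll' [Err [Ess Edd]]]; auto.
  assert (Hneq : l <> cp l l').
  { intro Eq. apply Hne. assert (kd G l' = deg0).
    { apply (dadd_cancel (kd G l)). rewrite <- Edd, <- Eq. apply functional_extensionality; intro i.
      unfold dadd, deg0; lia. }
    assert (Vertex G l') by (split; auto). rewrite Ecomp. symmetry; apply (vert_r _ _ HG); auto. }
  set (N := fun m => F m /\ m <> cp l l').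
  set (LN := filter (nb (fun m => m = cp l l')) LF).
  assert (HLN : forall m, N m <-> In m LN).
  { intro m. unfold LN. rewrite H_dec_list, <- HLF. unfold N. tauto. }
  assert (HN : FEat Gr N v).
  { split; auto. split. exists LN; auto. split.
    - intros m [Fm _]. apply Hel; auto.
    - intros x Hx Ex. destruct (Hex x Hx Ex) as [m [Fm [q Hq]]].
      destruct (classic (m = cp l l')) as [->|Hm].
      + exists l. split. split; auto.
        destruct Hx as [Hx Hxh].
        apply MCEr in Hq; auto. destruct Hq as [[Hq [Dq [[a [Ha [Ea Eqa]]] [b [Hb [Eb Eqb]]]]]] Hqh].
        rewrite Ess in Eb.
        destruct ((L_comp _ _ HG) l' b) as [Hl'b [Erl'b [Esl'b Edl'b]]]; auto.
        assert (Eq2 : q = cp l (cp l' b)) by (rewrite Eqb; apply (L_assoc _ _ HG); auto).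
        destruct ((L_comp _ _ HG) x a) as [_ [_ [Esxa Edxa]]]; auto.
        destruct ((L_comp _ _ HG) l (cp l' b)) as [_ [_ [Esx2 Edx2]]]; auto. congruence.
        destruct ((prefix _ _ HG) x a (djoin (kd G x) (kd G l))) as [z1 [c1 [Hz1 [Hc1 [E1 [E2 [D1 Eq1]]]]]]]; auto.
        { intro i. unfold djoin; lia. }
        { intro i. rewrite <- Eqa, Dq, Edd. unfold djoin, dadd. lia. }
        destruct ((prefix _ _ HG) l (cp l' b) (djoin (kd G x) (kd G l))) as [z2 [c2 [Hz2 [Hc2 [E3 [E4 [D2 Eq2']]]]]]]; auto.
        { congruence. }
        { intro i. unfold djoin; lia. }
        { intro i. rewrite <- Eq2, Dq, Edd. unfold djoin, dadd. lia. }
        destruct ((L_comp _ _ HG) x z1) as [Hq1 [_ [Esq1 _]]]; auto.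
        destruct ((L_comp _ _ HG) l z2) as [Hq2 [_ [Esq2 _]]]; auto.
        destruct ((common_prefix _ _ HG) (cp x z1) c1 (cp l z2) c2) as [Eq12 Ec12]; auto.
        { congruence. } { congruence. } { congruence. } { congruence. }
        exists (cp x z1). apply MCEr; auto. split.
        { split; auto. split; auto. split. exists z1; auto. exists z2. rewrite Eq12. auto. }
        { intro Hh. apply Hqh. rewrite Eqa, Eq1.
          destruct ((L_comp _ _ HG) (cp x z1) c1) as [_ [_ [Es3 _]]]; auto. congruence.
          rewrite Es3. apply hered; auto. rewrite <- E2. rewrite <- Esq1; auto. }
      + exists m. split. split; auto. exists q; auto. }
  apply (B_make N v LN); auto.
  assert (HFL : Forall (gd v) LF) by (apply (FEr_gd F v LF); auto).
  assert (Hl'' : gd v l) by (split; auto).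
  assert (Hll'' : gd v (cp l l')).
  { split. auto. change (rr l = v) in Erl. congruence. }
  assert (HFN : Forall (gd v) LN) by (apply (FEr_gd N v LN); auto).
  destruct (FEr_V _ _ Hfe0) as [HvG _].
  assert (EQ : Q v LF = Q v (cp l l' :: l :: LN)).
  { apply Q_seteq; auto. intro x. simpl. rewrite <- HLN, <- HLF. unfold N.
    split; [intro Fx; destruct (classic (x = cp l l')) as [->|Hx]; [left; auto|right; right; split; auto]|].
    intros [<-|[<-|[? ?]]]; auto. }
  assert (Fmul : f v (cp l l') * f v l = f v l).
  { rewrite f_mul; auto. rewrite p_single; auto.
    rewrite addNr, addr0. reflexivity.
    intro q. apply (MCE_ext_single _ _ HG); auto. }
  assert (I (Q v LF)) by (apply (B_get F v LF); auto).
  rewrite EQ in H0. simpl in H0. rewrite mulA, Fmul in H0.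
  change (f v l * Q v LN) with (Q v (l :: LN)) in H0.
  rewrite Q_dup in H0; auto. apply HLN. split; auto.
Qed.

Lemma partS4 F F' l : BB F -> BB F' -> F l -> FEat Gr F' (ss l) ->
  BB (fun m => (F m /\ m <> l) \/ exists g, F' g /\ m = cp l g).
Proof.
  intros HB HB' Fl Hfe'.
  pose proof HB as HB0. destruct HB as [_ [v [Hfe _]]]. pose proof Hfe as Hfe0.
  pose proof Hfe' as Hfe0'.
  destruct Hfe as [Hv [[LF HLF] [Hel Hex]]].
  destruct Hfe' as [Hv' [[LF' HLF'] [Hel' Hex']]].
  destruct (Hel l Fl) as [[Hl Hlh] [Erl Hlnv]]. change (rr l = v) in Erl.
  destruct (FEr_V _ _ Hfe0) as [HvG _].
  set (N := fun m => (F m /\ m <> l) \/ exists g, F' g /\ m = cp l g).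
  set (LFm := filter (nb (fun m => m = l)) LF).
  set (LN := LFm ++ map (cp l) LF').
  assert (HLN : forall m, N m <-> In m LN).
  { intro m. unfold LN, LFm, N. rewrite in_app_iff, H_dec_list, in_map_iff, <- HLF.
    split.
    - intros [H1|[g [Fg ->]]]; [left; auto|right; exists g; split; auto; apply HLF'; auto].
    - intros [H1|[g [<- Fg]]]; [left; auto|right; exists g; split; auto; apply HLF'; auto]. }
  assert (Hg : forall g, F' g -> dom g /\ ~ H (ss g) /\ rr g = ss l /\ ~ Vertex Gr g).
  { intros g Fg. apply (FEr_el F' (ss l) g); auto. }
  assert (HN : FEat Gr N v).
  { split; auto. split. exists LN; auto. split.
    - intros m [[Fm _]|[g [Fg ->]]]. apply Hel; auto.
      destruct (Hg g Fg) as [Hgd [Hgh [Erg _]]].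
      destruct ((L_comp _ _ HG) l g) as [Hlg [Erlg [Eslg Edlg]]]; auto.
      split; [split; auto; simpl; rewrite Eslg; auto|]. split. simpl; congruence.
      intro Hvr. apply Hlnv. split; [split; auto|]. destruct Hvr as [_ Hd].
      apply functional_extensionality; intro i. simpl in Hd. rewrite Hd in Edlg.
      apply (f_equal (fun h => h i)) in Edlg. simpl. unfold dadd, deg0 in *. lia.
    - intros x Hx Ex. destruct (Hex x Hx Ex) as [m [Fm [q Hq]]].
      destruct (classic (m = l)) as [->|Hm].
      2: { exists m. split. left; auto. exists q; auto. }
      destruct Hx as [Hxd Hxh]. change (rr x = v) in Ex.
      apply MCEr in Hq; auto.
      destruct Hq as [[Hq [Dq [[a [Ha [Ea Eqa]]] [b [Hb [Eb Eqb]]]]]] Hqh].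
      destruct ((L_comp _ _ HG) l b) as [_ [Erlb [Eslb Edlb]]]; auto.
      destruct ((L_comp _ _ HG) x a) as [_ [Erxa [Esxa Edxa]]]; auto.
      assert (Hbh : ~ H (ss b)) by (rewrite <- Eslb, <- Eqb; auto).
      destruct (Hex' b) as [g [Fg [p' Hp']]]. split; auto. simpl. auto.
      destruct (Hg g Fg) as [Hgd [Hgh [Erg _]]].
      apply MCEr in Hp'; auto.
      destruct Hp' as [[Hp' [Dp' [[a' [Ha' [Ea' Eqa']]] [b' [Hb' [Eb' Eqb']]]]]] Hp'h].
      destruct ((L_comp _ _ HG) b a') as [_ [Erba' [Esba' Edba']]]; auto.
      destruct ((L_comp _ _ HG) g b') as [_ [Ergb' [Esgb' Edgb']]]; auto.
      destruct ((L_comp _ _ HG) l g) as [Hlg [Erlg [Eslg Edlg]]]; auto.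
      destruct ((L_comp _ _ HG) a a') as [Haa' [Eraa' [Esaa' Edaa']]]; auto; try congruence.
      assert (Elp' : ss l = rr p') by congruence.
      destruct ((L_comp _ _ HG) l p') as [HP [ErP [EsP EdP]]]; auto.
      assert (F1 : cp l p' = cp x (cp a a')).
      { rewrite Eqa'. rewrite <- (L_assoc _ _ HG l b a'); auto; try congruence.
        rewrite <- Eqb, Eqa. apply (L_assoc _ _ HG); auto; congruence. }
      assert (F2 : cp l p' = cp (cp l g) b').
      { rewrite Eqb'. symmetry. apply (L_assoc _ _ HG); auto; congruence. }
      set (D := djoin (dg x) (dg (cp l g))).
      destruct ((prefix _ _ HG) x (cp a a') D) as [z1 [c1 [Hz1 [Hc1 [E1 [E2 [D1 Eq1]]]]]]]; auto; try congruence.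
      { intro i. unfold D, djoin. lia. }
      { intro i. rewrite <- F1. unfold D. rewrite Eqb in Dq. ptw i. unfold djoin, dadd in *. lia. }
      destruct ((prefix _ _ HG) (cp l g) b' D) as [z2 [c2 [Hz2 [Hc2 [E3 [E4 [D2 Eq2]]]]]]]; auto; try congruence.
      { intro i. unfold D, djoin. lia. }
      { intro i. rewrite <- F2. unfold D. rewrite Eqb in Dq. ptw i. unfold djoin, dadd in *. lia. }
      destruct ((L_comp _ _ HG) x z1) as [Hq1 [_ [Esq1 _]]]; auto.
      destruct ((L_comp _ _ HG) (cp l g) z2) as [Hq2 [_ [Esq2 _]]]; auto.
      destruct ((common_prefix _ _ HG) (cp x z1) c1 (cp (cp l g) z2) c2) as [Eq12 Ec12]; auto; try congruence.
      exists (cp l g). split. right. exists g; auto.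
      exists (cp x z1). apply MCEr; auto. split.
      { split; auto. split; auto. split. exists z1; auto. exists z2. rewrite Eq12. auto. }
      { intro Hh. apply Hp'h.
        destruct ((L_comp _ _ HG) (cp x z1) c1) as [_ [_ [Es3 _]]]; auto. congruence.
        assert (ss p' = ss c1) by congruence. rewrite H0.
        apply hered; auto. rewrite <- E2. rewrite <- Esq1; auto. } }
  apply (B_make N v LN); auto.
  subst v.
  assert (HFL : Forall (gd (rr l)) LF) by (apply (FEr_gd F (rr l) LF); auto).
  assert (HFL' : Forall (gd (ss l)) LF') by (apply (FEr_gd F' (ss l) LF'); auto).
  assert (HFm : Forall (gd (rr l)) LFm).
  { apply Forall_In. intros x Hx. unfold LFm in Hx. apply H_dec_list in Hx.
    rewrite Forall_forall in HFL. apply HFL, Hx. }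
  assert (HFmap : Forall (gd (rr l)) (map (cp l) LF')).
  { apply Forall_In. intros x Hx. apply in_map_iff in Hx. destruct Hx as [g [<- Hg']].
    apply HLF' in Hg'. destruct (Hg g Hg') as [Hgd [_ [Erg _]]].
    destruct ((L_comp _ _ HG) l g) as [? [? _]]; auto. split; auto. }
  unfold LN. rewrite Q_app, Q_map_comp, mulDr; auto.
  apply (IaddD I HI).
  - assert (E : Q (rr l) LFm * f (rr l) l = Q (rr l) LF).
    { assert (Hgl : gd (rr l) l) by (split; auto).
      replace (f (rr l) l) with (Q (rr l) (l :: nil)) by (simpl; apply fv; auto).
      rewrite <- Q_app; auto.
      apply Q_seteq; auto.
      apply Forall_In. intros x Hx. apply in_app_iff in Hx. destruct Hx as [Hx|[<-|[]]]; auto.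
      rewrite Forall_forall in HFm; auto.
      intro x. rewrite in_app_iff. unfold LFm. rewrite H_dec_list. simpl. split.
      - intros [[? ?]|[<-|[]]]; [auto| apply HLF; auto].
      - intro Hx. destruct (classic (x = l)) as [->|Hxl]; [right; left; auto|left; split; auto]. }
    rewrite E. apply (B_get F (rr l) LF); auto.
  - rewrite !mulA. apply (ImulR I HI). apply (ImulL I HI).
    apply (B_get F' (ss l) LF'); auto.
Qed.

Ltac gr := change (kcomp Gr) with (kcomp G) in *; change (ks Gr) with (ks G) in *;
  change (kr Gr) with (kr G) in *; change (kd Gr) with (kd G) in *.

Lemma fold_ext_in (F1 F2 : kM G -> A) (d : A) L : (forall m, In m L -> F1 m = F2 m) ->
  fold_right (fun m acc => F1 m * acc) d L = fold_right (fun m acc => F2 m * acc) d L.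
Proof.
  intro HE. induction L as [|m L IH]; simpl; auto.
  rewrite HE, IH; auto. intros; apply HE; right; auto. left; auto.
Qed.

Lemma NoDup_map_on (T U : Type) (g : T -> U) L : NoDup L ->
  (forall x y, In x L -> In y L -> g x = g y -> x = y) -> NoDup (map g L).
Proof.
  intros Hn. induction Hn as [|x L Hx Hn IH]; intro Hi; simpl; constructor.
  - intro Hin. apply in_map_iff in Hin. destruct Hin as [y [Ey Hy]].
    assert (y = x) by (apply Hi; [right; auto | left; auto | auto]). subst; auto.
  - apply IH. intros; apply Hi; auto; right; auto.
Qed.

Lemma partS2 F v l : BB F -> FEat Gr F v -> kdom Gr l -> kr Gr l = v ->
  ~ (exists m a, F m /\ kdom Gr a /\ ks Gr m = kr Gr a /\ l = kcomp Gr m a) ->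
  BB (Ext Gr l F).
Proof.
  intros HB Hfe [Hl Hlh] Er Hnot. change (rr l = v) in Er.
  pose proof Hfe as Hfe0.
  destruct Hfe as [Hv [[LF HLF] [Hel Hex]]].
  destruct (FEr_V _ _ Hfe0) as [HvG _].
  assert (Hw : Vertex G (ss l)) by (apply (L_rs _ _ HG); auto).
  set (ch := fun q => epsilon (inhabits l) (fun a => dom a /\ ss l = rr a /\ q = cp l a)).
  set (M := fun m => epsilon (inhabits nil)
         (fun L => NoDup L /\ (forall q, MCE G l m q <-> In q L) /\ p l * p m = sumP L)).
  assert (HM : forall m, dom m ->
     NoDup (M m) /\ (forall q, MCE G l m q <-> In q (M m)) /\ p l * p m = sumP (M m)).
  { intros m Hm. unfold M. apply epsilon_spec.
    destruct (T_mce l m) as [L [Hn [He Ex]]]; auto. exists L. auto. }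
  assert (Hch : forall m q, MCE G l m q -> dom (ch q) /\ ss l = rr (ch q) /\ q = cp l (ch q)).
  { intros m q Hq. unfold ch. apply epsilon_spec.
    destruct Hq as [_ [_ [[a [Ha [Ea Eqa]]] _]]]. exists a; auto. }
  assert (HelF : forall m, F m -> dom m /\ ~ H (ss m) /\ rr m = v).
  { intros m Fm. destruct (Hel m Fm) as [[? ?] [? _]]. auto. }
  assert (HLF2 : forall x : kM G, F x <-> @In (kM G) x LF) by exact HLF.
  clear HLF. rename HLF2 into HLF.
  set (C := @flat_map (kM G) (kM G) (fun m => map ch (M m)) LF).
  assert (HC : forall a : kM G, In a C <-> exists m q, F m /\ MCE G l m q /\ a = ch q).
  { intro a. unfold C. rewrite in_flat_map. split.
    - intros [m [Hm Ha]]. apply in_map_iff in Ha. destruct Ha as [q [<- Hq]].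
      apply HLF in Hm. exists m, q. split; auto. split; auto. apply (HM m); auto. apply HelF; auto.
    - intros [m [q [Fm [Hq ->]]]]. exists m. split. apply HLF; auto.
      apply in_map_iff. exists q. split; auto. apply (HM m); auto. apply HelF; auto. }
  assert (HX : forall a : kM G, Ext Gr l F a <-> In a C /\ ~ H (ss a)).
  { intro a. rewrite HC. split.
    - intros [m [Fm [[Ha Hah] [Ea Hmce]]]]. destruct (HelF m Fm) as [Hm _].
      apply MCEr in Hmce; auto. destruct Hmce as [Hmce _]. split; auto.
      exists m, (cp l a). split; auto. split; auto.
      destruct (Hch m _ Hmce) as [Ha' [Ea' Eq']].
      apply ((cancel_l _ _ HG) l a (ch (cp l a))); auto.
    - intros [[m [q [Fm [Hq ->]]]] Hah]. destruct (HelF m Fm) as [Hm _].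
      destruct (Hch m q Hq) as [Ha [Ea Eq]].
      exists m. split; auto. split. split; auto. split; auto.
      gr. apply MCEr; auto. rewrite <- Eq. split; auto.
      destruct ((L_comp _ _ HG) l (ch q)) as [_ [_ [Es _]]]; auto. rewrite Eq, Es; auto. }
  set (LX := filter (nb (fun a => H (ss a))) C).
  assert (HLX : forall a : kM G, Ext Gr l F a <-> In a LX).
  { intro a. unfold LX. rewrite H_dec_list. apply HX. }
  assert (HFX : FEat Gr (Ext Gr l F) (ss l)).
  { split. apply Vr. split; auto. split. exists LX; auto. split.
    - intros a Xa. pose proof Xa as Xa'. destruct Xa as [m [Fm [[Ha Hah] [Ea Hmce]]]]. gr.
      split; [split; auto|]. split. simpl; auto.
      intro Hva. apply Vr in Hva. destruct Hva as [Hva _].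
      assert (Eal : a = ss l) by (rewrite Ea; symmetry; apply (vert_r _ _ HG); auto).
      rewrite Eal, (L_idr _ _ HG) in Hmce; auto.
      destruct Hmce as [_ [_ [_ [b [Hb [Eb Eqb]]]]]]. apply Hnot. exists m, b. auto.
    - intros mu [Hmu Hmuh] Emu. change (rr mu = ss l) in Emu.
      destruct ((L_comp _ _ HG) l mu) as [Hlmu [Erlmu [Eslmu Edlmu]]]; auto.
      destruct (Hex (cp l mu)) as [m [Fm [P HP]]].
      { split; auto. simpl. rewrite Eslmu. auto. }
      { simpl. congruence. }
      destruct (HelF m Fm) as [Hm [Hmh Erm]].
      apply MCEr in HP; auto.
      destruct HP as [[HPd [DP [[ga [Hga [Ega EqP1]]] [be [Hbe [Ebe EqP2]]]]]] HPh].
      rewrite Eslmu in Ega.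
      destruct ((L_comp _ _ HG) mu ga) as [Hmuga [Ermuga [Esmuga Edmuga]]]; auto.
      assert (EqP : P = cp l (cp mu ga)) by (rewrite EqP1; apply (L_assoc _ _ HG); auto).
      destruct ((L_comp _ _ HG) l (cp mu ga)) as [_ [_ [EsP EdP]]]; auto; try congruence.
      destruct ((L_comp _ _ HG) m be) as [_ [_ [EsP2 EdP2]]]; auto.
      set (D := djoin (dg l) (dg m)).
      destruct ((prefix _ _ HG) l (cp mu ga) D) as [z1 [c1 [Hz1 [Hc1 [E1 [E2 [D1 Eq1]]]]]]]; auto; try congruence.
      { intro i. unfold D, djoin. lia. }
      { intro i. rewrite <- EqP. unfold D. ptw i. unfold djoin, dadd in *. lia. }
      destruct ((prefix _ _ HG) m be D) as [z2 [c2 [Hz2 [Hc2 [E3 [E4 [D2 Eq2]]]]]]]; auto; try congruence.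
      { intro i. unfold D, djoin. lia. }
      { intro i. rewrite <- EqP2. unfold D. ptw i. unfold djoin, dadd in *. lia. }
      destruct ((L_comp _ _ HG) l z1) as [Hq1 [_ [Esq1 Edq1]]]; auto.
      destruct ((L_comp _ _ HG) m z2) as [Hq2 [_ [Esq2 _]]]; auto.
      destruct ((common_prefix _ _ HG) (cp l z1) c1 (cp m z2) c2) as [Eq12 Ec12]; auto; try congruence.
      destruct ((L_comp _ _ HG) (cp l z1) c1) as [_ [_ [Es3 _]]]; auto; try congruence.
      assert (Hz1h : ~ H (ss z1)).
      { intro Hh. apply HPh. assert (ss P = ss c1) by congruence. rewrite H0.
        apply hered; auto. rewrite <- E2; auto. }
      exists z1. split.
      { exists m. split; auto. split. split; auto. split; auto.
        gr. apply MCEr; auto. split.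
        - split; auto. split; auto. split. exists z1; auto. exists z2. rewrite Eq12. auto.
        - rewrite Esq1; auto. }
      destruct ((L_comp _ _ HG) z1 c1) as [Hz1c1 [Erz1c1 [Esz1c1 Edz1c1]]]; auto.
      assert (Emg : cp mu ga = cp z1 c1).
      { apply ((cancel_l _ _ HG) l); auto; try congruence.
        rewrite Eq1. apply (L_assoc _ _ HG); auto. }
      set (DD := djoin (dg mu) (dg z1)).
      destruct ((prefix _ _ HG) mu ga DD) as [y1 [d1 [Hy1 [Hd1 [F1 [F2 [DD1 Eqy1]]]]]]]; auto; try congruence.
      { intro i. unfold DD, djoin. lia. }
      { intro i. unfold DD. rewrite <- EqP in EdP. unfold D in *. ptw i. unfold D, djoin, dadd in *. lia. }
      destruct ((prefix _ _ HG) z1 c1 DD) as [y2 [d2 [Hy2 [Hd2 [F3 [F4 [DD2 Eqy2]]]]]]]; auto; try congruence.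
      { intro i. unfold DD, djoin. lia. }
      { intro i. unfold DD. rewrite <- Emg. rewrite <- EqP in EdP. unfold D in *. ptw i. unfold D, djoin, dadd in *. lia. }
      destruct ((L_comp _ _ HG) mu y1) as [Hr1 [_ [Esr1 _]]]; auto.
      destruct ((L_comp _ _ HG) z1 y2) as [Hr2 [_ [Esr2 _]]]; auto.
      destruct ((common_prefix _ _ HG) (cp mu y1) d1 (cp z1 y2) d2) as [Er12 Ed12]; auto; try congruence.
      destruct ((L_comp _ _ HG) (cp mu y1) d1) as [_ [_ [Es4 _]]]; auto; try congruence.
      exists (cp mu y1). apply MCEr; auto. split.
      + split; auto. split; auto. split. exists y1; auto. exists y2. rewrite Er12. auto.
      + intro Hh. apply HPh. assert (ss P = ss d1) by congruence. rewrite H0.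
        apply hered; auto. rewrite <- F2, <- Esr1; auto. }
  apply (B_make _ (ss l) LX); auto.
  subst v.
  assert (IQ : I (Q (rr l) LF)) by (apply (B_get F (rr l) LF); auto).
  assert (HFL : Forall (gd (rr l)) LF) by (apply (FEr_gd F (rr l) LF); auto).
  assert (HFC : Forall (gd (ss l)) C).
  { apply Forall_In. intros a Ha. apply HC in Ha. destruct Ha as [m [q [Fm [Hq ->]]]].
    destruct (Hch m q Hq) as [? [? _]]. split; auto. }
  assert (EX : st (s l) * Q (rr l) LF * s l = Q (ss l) C).
  { rewrite conj_Q; auto. unfold C. rewrite <- Q_fold_app; auto.
    2: { intros m Hm. apply Forall_In. intros a Ha. apply in_map_iff in Ha.
         destruct Ha as [q [<- Hq]]. apply HLF in Hm. destruct (HelF m Hm) as [Hmd _].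
         destruct (HM m Hmd) as [_ [He _]]. apply He in Hq.
         destruct (Hch m q Hq) as [? [? _]]. split; auto. }
    apply fold_ext_in. intros m Hm. apply HLF in Hm. destruct (HelF m Hm) as [Hmd _].
    destruct (HM m Hmd) as [Hn [He Es]].
    rewrite conj_f; auto. rewrite (conj_p l m (M m) ch); auto.
    2: { intros q Hq. apply He in Hq. apply (Hch m q Hq). }
    apply orth_Q; auto.
    - apply Forall_In. intros a Ha. apply in_map_iff in Ha.
      destruct Ha as [q [<- Hq]]. apply He in Hq.
      destruct (Hch m q Hq) as [? [? _]]. split; auto.
    - apply NoDup_map_on; auto. intros q q' Hq Hq' Eqq.
      apply He in Hq. apply He in Hq'.
      destruct (Hch m q Hq) as [_ [_ E1]]. destruct (Hch m q' Hq') as [_ [_ E2]].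
      rewrite E1, E2, Eqq. reflexivity.
    - intros a b Ha Hb Hab. apply in_map_iff in Ha. apply in_map_iff in Hb.
      destruct Ha as [q [<- Hq]]. destruct Hb as [q' [<- Hq']].
      apply He in Hq. apply He in Hq'.
      destruct (Hch m q Hq) as [Ha [Ea E1]]. destruct (Hch m q' Hq') as [Hb [Eb E2]].
      apply p_orth; auto. apply (MCE_orth _ _ HG); auto.
      apply (dadd_cancel (dg l)).
      destruct ((L_comp _ _ HG) l (ch q)) as [_ [_ [_ D1]]]; auto.
      destruct ((L_comp _ _ HG) l (ch q')) as [_ [_ [_ D2]]]; auto.
      rewrite <- D1, <- D2, <- E1, <- E2.
      destruct Hq as [_ [Dq _]]. destruct Hq' as [_ [Dq' _]]. congruence. }
  assert (IC : I (Q (ss l) C)).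
  { rewrite <- EX. apply (ImulR I HI). apply (ImulL I HI). auto. }
  assert (Hq := Q_filter (ss l) (nb (fun a => H (ss a))) C Hw HFC).
  apply (eqI_I I HI _ (Q (ss l) C)); auto. apply (eqI_sym I HI). apply Hq.
  intros m Hm Hb. apply nb_false in Hb. apply H_p; auto.
  rewrite Forall_forall in HFC. apply HFC; auto.
Qed.

End TCKL.

Theorem mainTheorem13 (k : nat) (G : kg) (HG : is_kgraph G k)
  (Hfa : finitely_aligned G) (c : kM G -> kM G -> Cplx) (Hc : cocycle G c)
  (calE : (kM G -> Prop) -> Prop) (Hsat : satiated G calE)
  (A : CStar) (s : kM G -> A) (Hu : is_universal G c calE A s)
  (I : A -> Prop) (HI : closed_ideal A I) :
  hereditary G (H_of G A s I) /\
  E_saturated G calE (H_of G A s I) /\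
  satiated (restrict G (H_of G A s I)) (B_of G A s I (H_of G A s I)) /\
  (forall F, E_of G calE (H_of G A s I) F -> B_of G A s I (H_of G A s I) F).
Proof.
  destruct Hu as [[Ht HCK] _].
  split; [|split; [|split]].
  - eapply hered; eassumption.
  - eapply Esat; eassumption.
  - split; [|split; [|split; [|split]]].
    + intros F HB. exact (proj1 HB).
    + intros F v l HB Hfe Hl Er Hne. exact (partS1 _ _ HG _ Hc _ _ Ht _ HI _ _ _ HB Hfe Hl Er Hne).
    + intros F v l HB Hfe Hl Er Hnot. exact (partS2 _ _ HG _ Hc _ _ Ht _ HI _ _ _ HB Hfe Hl Er Hnot).
    + intros F l l' HB Fl Hl' Ec Fll' Hne. exact (partS3 _ _ HG _ Hc _ _ Ht _ HI _ _ _ HB Fl Hl' Ec Fll' Hne).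
    + intros F F' l HB HB' Fl Hfe'. exact (partS4 _ _ HG _ Hc _ _ Ht _ HI _ _ _ HB HB' Fl Hfe').
  - intros F HF. eapply part4; eassumption.
Qed.
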